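(* Let $A\in M_2(\mathbb{Z})$ be an expanding matrix whose characteristic polynomial is $x^2+px+q$ with $p\in\mathbb{Z}$ and $|q|=3$, and let $v\in\mathbb{R}^2$ be such that $\{v,Av\}$ is linearly independent. Then $T(A,\mathcal{D})$ is connected for $\mathcal{D}=\{0,v,Av+v\}$ and for $\mathcal{D}=\{0,v,-Av+v\}$.
   Context: A real square matrix is expanding if all its eigenvalues have modulus strictly larger than $1$. For an expanding matrix $A\in M_n(\mathbb{Z})$ and a finite set $\mathcal{D}\subset\mathbb{R}^n$ with $|\mathcal D|=|\det A|$, the self-affine set $T(A,\mathcal{D})$ is the unique nonempty compact set $T$ with $AT=T+\mathcal{D}$; equivalently $T=\{\sum_{i=1}^\infty A^{-i}d_{j_i}: d_{j_i}\in\mathcal{D}\}$. *)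

(* Defs.v *)
From Stdlib Require Import Reals List ZArith.
Open Scope R_scope.

Definition vec := (R * R)%type.
Definition vadd (x y : vec) : vec := (fst x + fst y, snd x + snd y).
Definition vopp (x : vec) : vec := (- fst x, - snd x).
Definition vscale (r : R) (x : vec) : vec := (r * fst x, r * snd x).
Definition vzero : vec := (0, 0).

Record M2 := mkM2 { e11 : R; e12 : R; e21 : R; e22 : R }.

Definition M2Z (a b c d : Z) : M2 := mkM2 (IZR a) (IZR b) (IZR c) (IZR d).

Definition mapply (A : M2) (x : vec) : vec :=
  (e11 A * fst x + e12 A * snd x, e21 A * fst x + e22 A * snd x).

Definition mdet (A : M2) : R := e11 A * e22 A - e12 A * e21 A.

(* Inverse matrix (meaningful when det A <> 0). *)
Definition minv (A : M2) : M2 :=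
  mkM2 (e22 A / mdet A) (- e12 A / mdet A) (- e21 A / mdet A) (e11 A / mdet A).

(* Characteristic polynomial det(xI - A) equals x^2 + p x + q (as polynomial
   functions over R, which determines the polynomial). *)
Definition char_poly_is (A : M2) (p q : R) : Prop :=
  forall x : R, (x - e11 A) * (x - e22 A) - e12 A * e21 A = x ^ 2 + p * x + q.

(* Complex numbers as pairs (re, im). *)
Definition Cmul (z w : R * R) : R * R :=
  (fst z * fst w - snd z * snd w, fst z * snd w + snd z * fst w).
Definition Csub (z w : R * R) : R * R := (fst z - fst w, snd z - snd w).
Definition Creal (r : R) : R * R := (r, 0).

(* z is a (complex) eigenvalue of A : det(A - z I) = 0 in C. *)
Definition is_eigenvalue (A : M2) (z : R * R) : Prop :=
  Csub (Cmul (Csub (Creal (e11 A)) z) (Csub (Creal (e22 A)) z))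
       (Creal (e12 A * e21 A)) = (0, 0).

Definition expanding (A : M2) : Prop :=
  forall z : R * R, is_eigenvalue A z -> fst z ^ 2 + snd z ^ 2 > 1.

Definition lin_indep2 (u w : vec) : Prop :=
  forall a b : R, vadd (vscale a u) (vscale b w) = vzero -> a = 0 /\ b = 0.

Fixpoint psum (A : M2) (dig : nat -> vec) (n : nat) : vec :=
  match n with
  | O => vzero
  | S k => vadd (psum A dig k) (Nat.iter (S k) (mapply (minv A)) (dig (S k)))
  end.

Definition vec_cv (u : nat -> vec) (l : vec) : Prop :=
  Un_cv (fun n => fst (u n)) (fst l) /\ Un_cv (fun n => snd (u n)) (snd l).

Definition self_affine_set (A : M2) (D : list vec) : vec -> Prop :=
  fun x => exists dig : nat -> vec,
    (forall i, In (dig i) D) /\ vec_cv (psum A dig) x.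

Definition vdist (x y : vec) : R :=
  sqrt ((fst x - fst y) ^ 2 + (snd x - snd y) ^ 2).

Definition open2 (U : vec -> Prop) : Prop :=
  forall x, U x -> exists eps, eps > 0 /\ forall y, vdist x y < eps -> U y.

Definition connected2 (S : vec -> Prop) : Prop :=
  ~ exists U V : vec -> Prop,
      open2 U /\ open2 V /\
      (forall x, S x -> U x \/ V x) /\
      (exists x, S x /\ U x) /\ (exists x, S x /\ V x) /\
      (forall x, S x -> U x -> V x -> False).

(* Main.v *)
Require Import Defs.
From Stdlib Require Import Reals List ZArith Lra Lia Psatz Classical ClassicalEpsilon.
Open Scope R_scope.

Lemma vec_ext (x y : vec) : fst x = fst y -> snd x = snd y -> x = y.
Proof. destruct x, y; simpl; intros; subst; auto. Qed.

Definition vsub (x y : vec) : vec := vadd x (vopp y).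
Definition nrm (x : vec) : R := Rabs (fst x) + Rabs (snd x).
Definition mn (M : M2) : R := Rabs (e11 M) + Rabs (e12 M) + Rabs (e21 M) + Rabs (e22 M).

Lemma nrm_pos x : 0 <= nrm x.
Proof. unfold nrm; pose proof (Rabs_pos (fst x)); pose proof (Rabs_pos (snd x)); lra. Qed.

Lemma mn_pos M : 0 <= mn M.
Proof. unfold mn; pose proof (Rabs_pos (e11 M)); pose proof (Rabs_pos (e12 M));
  pose proof (Rabs_pos (e21 M)); pose proof (Rabs_pos (e22 M)); lra. Qed.

Lemma mapply_add M x y : mapply M (vadd x y) = vadd (mapply M x) (mapply M y).
Proof. apply vec_ext; unfold mapply, vadd; simpl; ring. Qed.
Lemma mapply_sub M x y : mapply M (vsub x y) = vsub (mapply M x) (mapply M y).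
Proof. apply vec_ext; unfold mapply, vsub, vadd, vopp; simpl; ring. Qed.

Lemma abs_lin (a b x y : R) : Rabs (a * x + b * y) <= Rabs a * Rabs x + Rabs b * Rabs y.
Proof. eapply Rle_trans; [apply Rabs_triang|]. rewrite !Rabs_mult; lra. Qed.

Lemma nrm_mapply M x : nrm (mapply M x) <= mn M * nrm x.
Proof.
  unfold nrm, mn, mapply; simpl.
  pose proof (abs_lin (e11 M) (e12 M) (fst x) (snd x)).
  pose proof (abs_lin (e21 M) (e22 M) (fst x) (snd x)).
  pose proof (Rabs_pos (e11 M)); pose proof (Rabs_pos (e12 M));
  pose proof (Rabs_pos (e21 M)); pose proof (Rabs_pos (e22 M));
  pose proof (Rabs_pos (fst x)); pose proof (Rabs_pos (snd x)).
  nra.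
Qed.

Lemma nrm_triang x y : nrm (vadd x y) <= nrm x + nrm y.
Proof. unfold nrm, vadd; simpl.
  pose proof (Rabs_triang (fst x) (fst y)); pose proof (Rabs_triang (snd x) (snd y)); lra. Qed.

Lemma nrm_sub_sym x y : nrm (vsub x y) = nrm (vsub y x).
Proof. unfold nrm, vsub, vadd, vopp; simpl.
  f_equal; rewrite <- Rabs_Ropp; f_equal; ring. Qed.

Lemma nrm_sub_triang x y z : nrm (vsub x z) <= nrm (vsub x y) + nrm (vsub y z).
Proof.
  replace (vsub x z) with (vadd (vsub x y) (vsub y z)) by
    (apply vec_ext; unfold vsub, vadd, vopp; simpl; ring).
  apply nrm_triang.
Qed.

Lemma vdist_le x y : vdist x y <= nrm (vsub x y).
Proof.
  unfold vdist, nrm, vsub, vadd, vopp; simpl.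
  set (a := fst x - fst y). set (b := snd x - snd y).
  replace (fst x + - fst y) with a by (unfold a; ring).
  replace (snd x + - snd y) with b by (unfold b; ring).
  rewrite <- (sqrt_Rsqr (Rabs a + Rabs b)) by (pose proof (Rabs_pos a); pose proof (Rabs_pos b); lra).
  apply sqrt_le_1_alt. unfold Rsqr.
  pose proof (Rabs_pos a); pose proof (Rabs_pos b).
  assert (a ^ 2 = Rabs a * Rabs a) by (rewrite <- Rabs_mult; simpl; rewrite Rmult_1_r; rewrite Rabs_right; [ring| nra]).
  assert (b ^ 2 = Rabs b * Rabs b) by (rewrite <- Rabs_mult; simpl; rewrite Rmult_1_r; rewrite Rabs_right; [ring| nra]).
  nra.
Qed.

Definition Bpow (M : M2) (n : nat) (x : vec) : vec := Nat.iter n (mapply M) x.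

Lemma Bpow_S M n x : Bpow M (S n) x = mapply M (Bpow M n x).
Proof. reflexivity. Qed.

Lemma Bpow_sub M n x y : Bpow M n (vsub x y) = vsub (Bpow M n x) (Bpow M n y).
Proof. induction n; [reflexivity|]. rewrite !Bpow_S, IHn, mapply_sub. reflexivity. Qed.

Definition contracts (B : M2) (K r : R) : Prop :=
  0 < K /\ 0 <= r < 1 /\ forall n x, nrm (Bpow B n x) <= K * r ^ n * nrm x.

Lemma abs_le_of_sq (s M : R) : 0 <= M -> s ^ 2 <= M ^ 2 -> Rabs s <= M.
Proof.
  intros HM H. destruct (Rle_lt_dec (Rabs s) M) as [h|h]; auto.
  exfalso. assert (Rabs s ^ 2 = s ^ 2).
  { simpl. rewrite !Rmult_1_r, <- Rabs_mult. apply Rabs_right. nra. }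
  nra.
Qed.

Lemma pow_sq56 n : ((5/6) ^ n) ^ 2 = (25/36) ^ n.
Proof. rewrite <- pow_mult, Nat.mul_comm, pow_mult. f_equal. field. Qed.

Lemma Rabs_div3 p : Rabs (p/3) = Rabs p / 3.
Proof. unfold Rabs; destruct Rcase_abs, Rcase_abs; lra. Qed.

Lemma decay_q3 (p : R) (s : nat -> R) : p ^ 2 <= 9 ->
  (forall n, s (S (S n)) = (- p / 3) * s (S n) - (1/3) * s n) ->
  forall n, Rabs (s n) <= 4 * (5/6) ^ n * (Rabs (s O) + Rabs (s 1%nat)).
Proof.
  intros Hp Hrec.
  set (Q := fun n => s (S n) ^ 2 + (p/3) * s n * s (S n) + (1/3) * s n ^ 2).
  assert (HQ : forall n, Q n = (1/3) ^ n * Q O).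
  { induction n; [simpl; ring|].
    change ((1/3)^(S n)) with (1/3 * (1/3)^n).
    rewrite Rmult_assoc, <- IHn. unfold Q. rewrite Hrec. field. }
  assert (H1a : forall n, s n ^ 2 <= 12 * Q n).
  { intro n. unfold Q. pose proof (pow2_ge_0 (s n + 2 * p / 3 * s (S n))).
    assert (0 <= (9 - p^2) * s (S n) ^ 2) by (apply Rmult_le_pos; [lra| apply pow2_ge_0]).
    assert (E : 12 * (s (S n) ^ 2 + p / 3 * s n * s (S n) + 1 / 3 * s n ^ 2) - s n ^ 2
       = 3 * (s n + 2 * p / 3 * s (S n)) ^ 2 + 4/3 * ((9 - p^2) * s (S n) ^ 2)) by field.
    lra. }
  intro n. pose proof (H1a n) as H1.
  assert (H2 : Q O <= (Rabs (s O) + Rabs (s 1%nat)) ^ 2).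
  { unfold Q. set (x := s O). set (y := s 1%nat).
    assert (Hpa : Rabs p <= 3).
    { apply abs_le_of_sq; lra. }
    assert (Rabs (p/3 * x * y) <= Rabs x * Rabs y).
    { rewrite !Rabs_mult. pose proof (Rabs_pos x); pose proof (Rabs_pos y).
      assert (Rabs (p/3) <= 1). { rewrite Rabs_div3. lra. }
      assert (0 <= Rabs x * Rabs y) by (apply Rmult_le_pos; auto).
      rewrite Rmult_assoc. set (u := Rabs x * Rabs y) in *. nra. }
    assert (x ^ 2 = Rabs x ^ 2) by (simpl; rewrite !Rmult_1_r, <- Rabs_mult; symmetry; apply Rabs_right; nra).
    assert (y ^ 2 = Rabs y ^ 2) by (simpl; rewrite !Rmult_1_r, <- Rabs_mult; symmetry; apply Rabs_right; nra).
    pose proof (Rle_abs (p/3*x*y)). pose proof (Rabs_pos x); pose proof (Rabs_pos y). nra. }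
  apply abs_le_of_sq.
  { pose proof (Rabs_pos (s O)); pose proof (Rabs_pos (s 1%nat));
    pose proof (pow_le (5/6) n ltac:(lra)). repeat apply Rmult_le_pos; lra. }
  assert (Hq0 : 0 <= Q O) by (pose proof (H1a O); pose proof (pow2_ge_0 (s O)); lra).
  assert (Hpw : (1/3) ^ n <= (25/36) ^ n) by (apply pow_incr; lra).
  pose proof (pow_le (1/3) n ltac:(lra)).
  replace ((4 * (5 / 6) ^ n * (Rabs (s 0%nat) + Rabs (s 1%nat))) ^ 2) with
     (16 * ((5/6)^n)^2 * (Rabs (s 0%nat) + Rabs (s 1%nat)) ^ 2) by ring.
  rewrite pow_sq56. rewrite HQ in H1.
  pose proof (pow_le (25/36) n ltac:(lra)).
  set (S0 := (Rabs (s 0%nat) + Rabs (s 1%nat)) ^ 2) in *.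
  nra.
Qed.

Lemma decay_qm3 (p : R) (s : nat -> R) : -1 <= p <= 1 ->
  (forall n, s (S (S n)) = (p / 3) * s (S n) - (- (1/3)) * s n) ->
  forall n, Rabs (s n) <= 4 * (5/6) ^ n * (Rabs (s O) + Rabs (s 1%nat)).
Proof.
  intros Hp Hrec.
  set (N := fun n => Rabs (s (S n)) + (1/2) * Rabs (s n)).
  assert (HN : forall n, N n <= (5/6) ^ n * N O).
  { induction n; [simpl; lra|].
    change ((5/6)^(S n)) with (5/6 * (5/6)^n).
    assert (N (S n) <= 5/6 * N n).
    { unfold N. rewrite Hrec.
      replace (p / 3 * s (S n) - - (1 / 3) * s n) with (p/3 * s (S n) + 1/3 * s n) by field.
      pose proof (abs_lin (p/3) (1/3) (s (S n)) (s n)).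
      assert (Rabs (p/3) <= 1/3). { rewrite Rabs_div3.
        assert (Rabs p <= 1) by (unfold Rabs; destruct Rcase_abs; lra). lra. }
      rewrite (Rabs_right (1/3)) in H by lra.
      pose proof (Rabs_pos (s n)); pose proof (Rabs_pos (s (S n))); pose proof (Rabs_pos (p/3)).
      nra. }
    pose proof (Rabs_pos (s n)); pose proof (Rabs_pos (s (S n))). nra. }
  intro n. pose proof (HN n). unfold N in *.
  pose proof (Rabs_pos (s n)); pose proof (Rabs_pos (s (S n))).
  pose proof (Rabs_pos (s O)); pose proof (Rabs_pos (s 1%nat)).
  pose proof (pow_le (5/6) n ltac:(lra)).
  nra.
Qed.

Lemma contracts_of_rec (B : M2) (t dl : R) :
  (forall s : nat -> R, (forall n, s (S (S n)) = t * s (S n) - dl * s n) ->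
     forall n, Rabs (s n) <= 4 * (5/6) ^ n * (Rabs (s O) + Rabs (s 1%nat))) ->
  (forall x, mapply B (mapply B x) = vsub (vscale t (mapply B x)) (vscale dl x)) ->
  contracts B (8 * (1 + mn B)) (5/6).
Proof.
  intros Hdec HCH. pose proof (mn_pos B).
  split; [lra|]. split; [lra|].
  intros n x.
  assert (Hb : nrm (mapply B x) <= mn B * nrm x) by apply nrm_mapply.
  pose proof (nrm_pos x).
  assert (H1 := Hdec (fun k => fst (Bpow B k x))).
  assert (H2 := Hdec (fun k => snd (Bpow B k x))).
  cbv beta in H1, H2.
  specialize (H1 ltac:(intro k; rewrite !Bpow_S, HCH; unfold vsub, vadd, vopp, vscale; simpl; ring) n).
  specialize (H2 ltac:(intro k; rewrite !Bpow_S, HCH; unfold vsub, vadd, vopp, vscale; simpl; ring) n).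
  change (Bpow B 0 x) with x in H1, H2. change (Bpow B 1 x) with (mapply B x) in H1, H2.
  unfold nrm in *.
  pose proof (pow_le (5/6) n ltac:(lra)).
  set (r := (5/6)^n) in *.
  assert (0 <= 4 * r) by lra.
  set (N := Rabs (fst x) + Rabs (snd x)) in *.
  set (mN := mn B * N) in *.
  assert (Ha : Rabs (fst x) + Rabs (fst (mapply B x)) <= N + mN)
    by (pose proof (Rabs_pos (snd (mapply B x))); pose proof (Rabs_pos (snd x)); unfold N in *; lra).
  assert (Hc : Rabs (snd x) + Rabs (snd (mapply B x)) <= N + mN)
    by (pose proof (Rabs_pos (fst (mapply B x))); pose proof (Rabs_pos (fst x)); unfold N in *; lra).
  apply (Rmult_le_compat_l (4 * r)) in Ha; [|lra].
  apply (Rmult_le_compat_l (4 * r)) in Hc; [|lra].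
  replace (8 * (1 + mn B) * r * N) with (4 * r * (N + mN) + 4 * r * (N + mN)) by (unfold mN; ring).
  lra.
Qed.

Lemma geom_partial (u : nat -> R) C r : 0 <= r < 1 ->
  (forall n, Rabs (u (S n) - u n) <= C * r ^ n) ->
  forall n k, Rabs (u (n + k)%nat - u n) <= C * r ^ n / (1 - r).
Proof.
  intros Hr H.
  assert (HC : 0 <= C) by (pose proof (H O); simpl in *; pose proof (Rabs_pos (u 1%nat - u O)); lra).
  assert (forall n k, Rabs (u (n + k)%nat - u n) <= C * r ^ n * (1 - r ^ k) / (1 - r)).
  { intros n k. induction k.
    - rewrite Nat.add_0_r. replace (u n - u n) with 0 by ring. rewrite Rabs_R0.
      assert (C * r^n * (1 - r^0)/(1-r) = 0) by (simpl; field; lra). lra.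
    - replace (u (n + S k)%nat - u n) with ((u (S (n + k)) - u (n + k)%nat) + (u (n+k)%nat - u n))
        by (rewrite Nat.add_succ_r; ring).
      eapply Rle_trans; [apply Rabs_triang|].
      pose proof (H (n + k)%nat). rewrite pow_add in H0.
      replace (C * r ^ n * (1 - r ^ S k) / (1 - r)) with
        (C * (r ^ n * r ^ k) + C * r ^ n * (1 - r ^ k) / (1 - r)) by (simpl; field; lra).
      lra. }
  intros n k. eapply Rle_trans; [apply H0|].
  pose proof (pow_le r n ltac:(lra)). pose proof (pow_le r k ltac:(lra)).
  unfold Rdiv. apply Rmult_le_compat_r; [apply Rlt_le, Rinv_0_lt_compat; lra|].
  assert (0 <= C * r ^ n) by (apply Rmult_le_pos; lra). nra.
Qed.

Lemma geom_cv (u : nat -> R) C r : 0 <= r < 1 ->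
  (forall n, Rabs (u (S n) - u n) <= C * r ^ n) -> exists l, Un_cv u l.
Proof.
  intros Hr H.
  assert (HC : 0 <= C) by (pose proof (H O); simpl in *; pose proof (Rabs_pos (u 1%nat - u O)); lra).
  assert (Cc : Cauchy_crit u).
  { intros eps Heps.
    destruct (pow_lt_1_zero r ltac:(rewrite Rabs_right; lra) (eps * (1 - r) / (2 * C + 1)))
      as [N HN].
    { apply Rdiv_lt_0_compat; nra. }
    exists N. intros n m Hn Hm. unfold Rdist.
    pose proof (geom_partial u C r Hr H N (n - N)).
    pose proof (geom_partial u C r Hr H N (m - N)).
    replace (N + (n - N))%nat with n in H0 by lia.
    replace (N + (m - N))%nat with m in H1 by lia.
    specialize (HN N (le_n N)). rewrite Rabs_right in HN by (apply Rle_ge, pow_le; lra).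
    assert (C * r ^ N / (1 - r) < eps / 2).
    { apply (Rmult_lt_reg_r (1 - r)); [lra|]. unfold Rdiv.
      rewrite Rmult_assoc, Rinv_l, Rmult_1_r by lra.
      apply (Rmult_lt_compat_r (2 * C + 1)) in HN; [|lra].
      unfold Rdiv in HN. rewrite Rmult_assoc, Rinv_l, Rmult_1_r in HN by lra.
      pose proof (pow_le r N ltac:(lra)). nra. }
    replace (u n - u m) with ((u n - u N) - (u m - u N)) by ring.
    eapply Rle_lt_trans; [apply Rabs_triang|]. rewrite Rabs_Ropp. lra. }
  destruct (R_complete u Cc) as [l Hl]. exists l; auto.
Qed.

Lemma lim_bound (u : nat -> R) l M : Un_cv u l -> (forall n, Rabs (u n) <= M) -> Rabs l <= M.
Proof.
  intros Hu Hb. destruct (Rle_lt_dec (Rabs l) M) as [h|h]; auto.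
  destruct (Hu (Rabs l - M)) as [N HN]; [lra|].
  specialize (HN N (le_n N)). specialize (Hb N). unfold Rdist in HN.
  pose proof (Rabs_triang_inv l (u N)). rewrite Rabs_minus_sym in HN. lra.
Qed.

Definition cvn (u : nat -> vec) (l : vec) : Prop :=
  forall eps, eps > 0 -> exists N, forall n, (n >= N)%nat -> nrm (vsub (u n) l) < eps.

Lemma cvn_vec_cv u l : cvn u l <-> vec_cv u l.
Proof.
  split.
  - intros H. split; intros eps He; destruct (H eps He) as [N HN]; exists N; intros n Hn;
      specialize (HN n Hn); unfold nrm, vsub, vadd, vopp, Rdist in *; simpl in *;
      pose proof (Rabs_pos (fst (u n) + - fst l)); pose proof (Rabs_pos (snd (u n) + - snd l));
      unfold Rminus; lra.
  - intros [H1 H2] eps He.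
    destruct (H1 (eps/2)) as [N1 HN1]; [lra|]. destruct (H2 (eps/2)) as [N2 HN2]; [lra|].
    exists (N1 + N2)%nat. intros n Hn. specialize (HN1 n ltac:(lia)). specialize (HN2 n ltac:(lia)).
    unfold nrm, vsub, vadd, vopp, Rdist in *; simpl in *. unfold Rminus in *. lra.
Qed.

Lemma cvn_shift u l : cvn (fun n => u (S n)) l -> cvn u l.
Proof. intros H eps He. destruct (H eps He) as [N HN]. exists (S N). intros n Hn.
  destruct n; [lia|]. apply HN. lia. Qed.

Lemma cvn_shift' u l : cvn u l -> cvn (fun n => u (S n)) l.
Proof. intros H eps He. destruct (H eps He) as [N HN]. exists N. intros n Hn. apply HN. lia. Qed.

Lemma cvn_affine (M : M2) (d : vec) u l : cvn u l ->
  cvn (fun n => mapply M (vadd d (u n))) (mapply M (vadd d l)).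
Proof.
  intros H eps He. pose proof (mn_pos M).
  destruct (H (eps / (mn M + 1))) as [N HN]. { apply Rdiv_lt_0_compat; lra. }
  exists N. intros n Hn. specialize (HN n Hn).
  rewrite <- mapply_sub. eapply Rle_lt_trans; [apply nrm_mapply|].
  replace (vsub (vadd d (u n)) (vadd d l)) with (vsub (u n) l)
    by (apply vec_ext; unfold vsub, vadd, vopp; simpl; ring).
  pose proof (nrm_pos (vsub (u n) l)).
  apply (Rmult_lt_compat_l (mn M + 1)) in HN; [|lra].
  replace ((mn M + 1) * (eps / (mn M + 1))) with eps in HN by (field; lra). nra.
Qed.

Lemma cvn_unique u l1 l2 : cvn u l1 -> cvn u l2 -> l1 = l2.
Proof.
  intros H1 H2. apply cvn_vec_cv in H1. apply cvn_vec_cv in H2.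
  destruct H1, H2. apply vec_ext; eapply UL_sequence; eauto.
Qed.

Lemma cvn_ext u w l : (forall n, u n = w n) -> cvn u l -> cvn w l.
Proof. intros E H eps He. destruct (H eps He) as [N HN]. exists N. intros n Hn. rewrite <- E. auto. Qed.

Lemma cvn_map M u l : cvn u l -> cvn (fun n => mapply M (u n)) (mapply M l).
Proof.
  intros H. pose proof (cvn_affine M vzero u l H) as H'.
  replace (mapply M l) with (mapply M (vadd vzero l))
    by (f_equal; apply vec_ext; unfold vadd, vzero; simpl; ring).
  eapply cvn_ext; [|exact H']. intro n. simpl. f_equal. apply vec_ext; unfold vadd, vzero; simpl; ring.
Qed.

Lemma cvn_addr u l d : cvn u l -> cvn (fun n => vadd (u n) d) (vadd l d).
Proof.
  intros H eps He. destruct (H eps He) as [N HN]. exists N. intros n Hn.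
  replace (vsub (vadd (u n) d) (vadd l d)) with (vsub (u n) l)
    by (apply vec_ext; unfold vsub, vadd, vopp; simpl; ring). auto.
Qed.

Definition Dn (D : list vec) : R := fold_right (fun d acc => nrm d + acc) 0 D.

Lemma Dn_bound D d : In d D -> nrm d <= Dn D.
Proof.
  induction D; simpl; [tauto|]. intros [<-|H].
  - assert (0 <= Dn D) by (clear; induction D; simpl; [lra| pose proof (nrm_pos a); lra]). lra.
  - pose proof (nrm_pos a). specialize (IHD H). lra.
Qed.

Lemma vadd_0l x : vadd vzero x = x.
Proof. apply vec_ext; unfold vadd, vzero; cbn [fst snd]; ring. Qed.
Lemma vadd_0r x : vadd x vzero = x.
Proof. apply vec_ext; unfold vadd, vzero; cbn [fst snd]; ring. Qed.

Lemma vadd_assoc x y z : vadd (vadd x y) z = vadd x (vadd y z).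
Proof. apply vec_ext; unfold vadd; cbn [fst snd]; ring. Qed.

Lemma vsub_add_l x y : vsub (vadd x y) x = y.
Proof. apply vec_ext; unfold vsub, vadd, vopp; cbn [fst snd]; ring. Qed.

Section Struct.
Variable A : M2.
Variable D : list vec.
Hypothesis HAB : forall x, mapply A (mapply (minv A) x) = x.
Hypothesis HBA : forall x, mapply (minv A) (mapply A x) = x.
Let B := minv A.
Let T := self_affine_set A D.

Lemma psum_ext dig1 dig2 : (forall k, dig1 (S k) = dig2 (S k)) -> forall n, psum A dig1 n = psum A dig2 n.
Proof. intros E n. induction n; simpl; [reflexivity|]. rewrite IHn, E. reflexivity. Qed.

Lemma psum_cons dig n :
  psum A dig (S n) = mapply B (vadd (dig 1%nat) (psum A (fun k => dig (S k)) n)).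
Proof.
  induction n.
  - change (psum A dig 1) with (vadd vzero (mapply B (dig 1%nat))). simpl psum.
    rewrite vadd_0l, vadd_0r. reflexivity.
  - change (psum A dig (S (S n))) with
      (vadd (psum A dig (S n)) (mapply B (Nat.iter (S n) (mapply B) (dig (S (S n)))))).
    rewrite IHn. simpl psum.
    rewrite <- !mapply_add. f_equal. rewrite vadd_assoc. reflexivity.
Qed.

Lemma psum_diff dig n : vsub (psum A dig (S n)) (psum A dig n) = Bpow B (S n) (dig (S n)).
Proof. simpl psum. rewrite vsub_add_l. reflexivity. Qed.

Variables K r : R.
Hypothesis HC : contracts B K r.

Definition MT := 2 * (K * Dn D) / (1 - r).

Lemma psum_conv dig : (forall i, In (dig i) D) ->
  exists l, vec_cv (psum A dig) l /\ nrm l <= MT.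
Proof.
  intros Hd. destruct HC as [HK [Hr Hc]].
  assert (HDn : 0 <= Dn D) by (pose proof (Dn_bound D (dig O) (Hd O)); pose proof (nrm_pos (dig O)); lra).
  assert (Hstep : forall n, nrm (vsub (psum A dig (S n)) (psum A dig n)) <= (K * Dn D) * r ^ n).
  { intro n. rewrite psum_diff. eapply Rle_trans; [apply Hc|].
    pose proof (Dn_bound D _ (Hd (S n))). pose proof (pow_le r n ltac:(lra)).
    simpl. assert (0 <= K * r ^ n) by (apply Rmult_le_pos; lra).
    pose proof (nrm_pos (dig (S n))).
    assert (K * (r * r ^ n) <= K * r^n) by nra. nra. }
  assert (H1 : forall n, Rabs (fst (psum A dig (S n)) - fst (psum A dig n)) <= (K * Dn D) * r ^ n).
  { intro n. specialize (Hstep n). unfold nrm, vsub, vadd, vopp in Hstep. cbn [fst snd] in Hstep.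
    pose proof (Rabs_pos (snd (psum A dig (S n)) + - snd (psum A dig n))). unfold Rminus. lra. }
  assert (H2 : forall n, Rabs (snd (psum A dig (S n)) - snd (psum A dig n)) <= (K * Dn D) * r ^ n).
  { intro n. specialize (Hstep n). unfold nrm, vsub, vadd, vopp in Hstep. cbn [fst snd] in Hstep.
    pose proof (Rabs_pos (fst (psum A dig (S n)) + - fst (psum A dig n))). unfold Rminus. lra. }
  destruct (geom_cv _ _ _ Hr H1) as [l1 Hl1].
  destruct (geom_cv _ _ _ Hr H2) as [l2 Hl2].
  exists (l1, l2). split; [split; assumption|].
  pose proof (geom_partial _ _ _ Hr H1 O) as G1. pose proof (geom_partial _ _ _ Hr H2 O) as G2.
  simpl in G1, G2.
  assert (B1 : Rabs l1 <= K * Dn D * 1 / (1 - r)).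
  { apply (lim_bound _ _ _ Hl1). intro n. specialize (G1 n). rewrite Rminus_0_r in G1. exact G1. }
  assert (B2 : Rabs l2 <= K * Dn D * 1 / (1 - r)).
  { apply (lim_bound _ _ _ Hl2). intro n. specialize (G2 n). rewrite Rminus_0_r in G2. exact G2. }
  unfold nrm, MT. simpl. rewrite Rmult_1_r in B1, B2. unfold Rdiv in *. lra.
Qed.

Lemma T_bound t : T t -> nrm t <= MT.
Proof.
  intros [dig [Hd Hcv]]. destruct (psum_conv dig Hd) as [l [Hl Hb]].
  apply cvn_vec_cv in Hcv. apply cvn_vec_cv in Hl.
  rewrite (cvn_unique _ _ _ Hcv Hl). auto.
Qed.

Lemma L1 d t : In d D -> T t -> T (mapply B (vadd d t)).
Proof.
  intros Hd [dig [Hdig Hcv]].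
  set (dig' := fun k => match k with O => d | S O => d | S k' => dig k' end).
  exists dig'. split.
  { intros [|[|k]]; simpl; auto. }
  apply cvn_vec_cv. apply cvn_vec_cv in Hcv.
  apply cvn_shift. eapply cvn_ext; [|exact (cvn_affine B d _ _ Hcv)].
  intro n. cbv beta. symmetry. rewrite psum_cons. f_equal. f_equal.
  apply psum_ext. intro k. reflexivity.
Qed.

Lemma L2cv dig t : vec_cv (psum A dig) t ->
  vec_cv (psum A (fun k => dig (S k))) (vsub (mapply A t) (dig 1%nat)).
Proof.
  intros Hcv. apply cvn_vec_cv. apply cvn_vec_cv in Hcv.
  apply cvn_shift' in Hcv. apply (cvn_map A) in Hcv.
  apply (cvn_addr _ _ (vopp (dig 1%nat))) in Hcv.
  eapply cvn_ext; [|exact Hcv]. intro n. cbv beta. rewrite psum_cons. unfold B. rewrite HAB.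
  apply vec_ext; unfold vadd, vopp; simpl; ring.
Qed.

Lemma L2eq t d : t = mapply B (vadd d (vsub (mapply A t) d)).
Proof.
  replace (vadd d (vsub (mapply A t) d)) with (mapply A t)
    by (apply vec_ext; unfold vsub, vadd, vopp; simpl; ring).
  unfold B. rewrite HBA. reflexivity.
Qed.

Lemma L2 t : T t -> exists d t', In d D /\ T t' /\ t = mapply B (vadd d t').
Proof.
  intros [dig [Hd Hcv]]. exists (dig 1%nat), (vsub (mapply A t) (dig 1%nat)).
  split; [auto|]. split; [|apply L2eq].
  exists (fun k => dig (S k)). split; [auto|]. apply L2cv; auto.
Qed.

Definition G (w : list vec) (x : vec) : vec :=
  fold_right (fun d y => mapply B (vadd d y)) x w.

Lemma L3 w t : Forall (fun d => In d D) w -> T t -> T (G w t).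
Proof. induction 1; simpl; auto. intros Ht. apply L1; auto. Qed.

Lemma G_app w1 w2 x : G (w1 ++ w2) x = G w1 (G w2 x).
Proof. unfold G. apply fold_right_app. Qed.

Lemma G_diff w x y : vsub (G w x) (G w y) = Bpow B (length w) (vsub x y).
Proof.
  induction w; simpl; [reflexivity|].
  rewrite <- mapply_sub, <- IHw. f_equal.
  apply vec_ext; unfold vsub, vadd, vopp; simpl; ring.
Qed.

Fixpoint wpre (dig : nat -> vec) (n : nat) : list vec :=
  match n with O => nil | S k => dig 1%nat :: wpre (fun i => dig (S i)) k end.

Lemma pre_len dig n : length (wpre dig n) = n.
Proof. revert dig; induction n; intros; simpl; auto. Qed.

Lemma pre_inD dig n : (forall i, In (dig i) D) -> Forall (fun d => In d D) (wpre dig n).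
Proof. revert dig; induction n; intros dig H; simpl; constructor; auto. Qed.

Lemma pre_snoc dig n : wpre dig (S n) = wpre dig n ++ (dig (S n) :: nil).
Proof. revert dig; induction n; intros dig; [reflexivity|].
  change (wpre dig (S (S n))) with (dig 1%nat :: wpre (fun i => dig (S i)) (S n)).
  rewrite IHn. reflexivity. Qed.

Lemma lim_pre dig t : (forall i, In (dig i) D) -> vec_cv (psum A dig) t ->
  forall n, exists t', T t' /\ t = G (wpre dig n) t'.
Proof.
  intros Hd Hcv n. revert dig t Hd Hcv. induction n; intros dig t Hd Hcv.
  - exists t. split; [exists dig; auto| reflexivity].
  - destruct (IHn (fun k => dig (S k)) _ (fun i => Hd (S i)) (L2cv _ _ Hcv)) as [t' [Ht' E]].
    exists t'. split; auto. simpl. rewrite <- E. apply L2eq.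
Qed.

End Struct.

Section Main.
Variable A : M2.
Variables d0 d1 d2 : vec.
Let D := d0 :: d1 :: d2 :: nil.
Hypothesis HAB : forall x, mapply A (mapply (minv A) x) = x.
Hypothesis HBA : forall x, mapply (minv A) (mapply A x) = x.
Variables K r : R.
Hypothesis HC : contracts (minv A) K r.
Let T := self_affine_set A D.
Let inD (w : list vec) := Forall (fun d => In d D) w.

Definition edge (da db : vec) := exists t t', T t /\ T t' /\ vadd da t = vadd db t'.

Lemma same_side (P Q : vec -> Prop) da db : In da D -> edge da db ->
  (forall x, T x -> P x -> Q x -> False) ->
  (forall t, T t -> P (mapply (minv A) (vadd da t))) ->
  (forall t, T t -> Q (mapply (minv A) (vadd db t))) -> False.
Proof.
  intros Hda [t [t' [Tt [Tt' E]]]] disj HP HQ.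
  apply (disj (mapply (minv A) (vadd da t))).
  - apply L1; auto.
  - auto.
  - rewrite E. auto.
Qed.

Lemma sides : edge d0 d1 -> (edge d2 d0 \/ edge d2 d1) ->
  forall N (U V : vec -> Prop), (forall x, T x -> U x \/ V x) -> (forall x, T x -> U x -> V x -> False) ->
  (forall w, length w = N -> inD w -> (forall t, T t -> U (G A w t)) \/ (forall t, T t -> V (G A w t))) ->
  (forall t, T t -> U t) \/ (forall t, T t -> V t).
Proof.
  intros E01 E2 N. induction N; intros U V cov disj Hw.
  - exact (Hw nil eq_refl (Forall_nil _)).
  - assert (side : forall d, In d D -> (forall t, T t -> U (mapply (minv A) (vadd d t))) \/
                                      (forall t, T t -> V (mapply (minv A) (vadd d t)))).
    { intros d Hd. apply (IHN (fun x => U (mapply (minv A) (vadd d x))) (fun x => V (mapply (minv A) (vadd d x)))).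
      - intros x Tx. apply cov. apply L1; auto.
      - intros x Tx. apply disj. apply L1; auto.
      - intros w Hl Hi. apply (Hw (d :: w)); simpl; auto. constructor; auto. }
    assert (disj' : forall x, T x -> V x -> U x -> False) by (intros; eapply disj; eauto).
    assert (I0 : In d0 D) by (simpl; auto). assert (I1 : In d1 D) by (simpl; auto).
    assert (I2 : In d2 D) by (simpl; auto).
    assert (fin : forall P : vec -> Prop,
      (forall t, T t -> P (mapply (minv A) (vadd d0 t))) ->
      (forall t, T t -> P (mapply (minv A) (vadd d1 t))) ->
      (forall t, T t -> P (mapply (minv A) (vadd d2 t))) -> forall t, T t -> P t).
    { intros P h0 h1 h2 t Tt. destruct (L2 A D HAB HBA t Tt) as [d [t' [Hd [Tt' ->]]]].
      simpl in Hd. destruct Hd as [<-|[<-|[<-|[]]]]; auto. }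
    destruct (side d0 I0) as [a0|a0]; destruct (side d1 I1) as [a1|a1];
    destruct (side d2 I2) as [a2|a2];
    try (left; apply fin; assumption); try (right; apply fin; assumption); exfalso;
    try (eapply (same_side _ _ d0 d1 I0 E01 disj); eassumption);
    try (eapply (same_side _ _ d0 d1 I0 E01 disj'); eassumption);
    destruct E2 as [E2|E2];
    try (eapply (same_side _ _ d2 _ I2 E2 disj); eassumption);
    try (eapply (same_side _ _ d2 _ I2 E2 disj'); eassumption).
Qed.


Lemma nrm_vsub_le x y : nrm (vsub x y) <= nrm x + nrm y.
Proof. unfold vsub. eapply Rle_trans; [apply nrm_triang|].
  unfold nrm, vopp; cbn [fst snd]. rewrite !Rabs_Ropp. lra. Qed.

Section Konig.
Variables U V : vec -> Prop.
Hypothesis oU : open2 U.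
Hypothesis oV : open2 V.
Hypothesis cov : forall x, T x -> U x \/ V x.
Hypothesis disj : forall x, T x -> U x -> V x -> False.

Definition bad (w : list vec) := (exists t, T t /\ U (G A w t)) /\ (exists t, T t /\ V (G A w t)).

Lemma bad_mono w u : inD u -> bad (w ++ u) -> bad w.
Proof.
  intros Hu [[t [Tt Ut]] [t' [Tt' Vt']]]. rewrite G_app in Ut, Vt'.
  split; eexists; split; [apply L3| exact Ut| apply L3 | exact Vt']; auto.
Qed.

Definition infbad (w : list vec) := forall m, exists u, length u = m /\ inD u /\ bad (w ++ u).

Lemma infbad_step w : infbad w -> exists d, In d D /\ infbad (w ++ d :: nil).
Proof.
  intros Hw. apply NNPP. intro Hn.
  assert (Hq : forall d, In d D -> exists m, forall u, length u = m -> inD u -> ~ bad ((w ++ d :: nil) ++ u)).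
  { intros d Hd. apply NNPP. intro Hm. apply Hn. exists d. split; auto.
    intro m. apply NNPP. intro Hm2. apply Hm. exists m. intros u Hl Hi Hb. apply Hm2. exists u. auto. }
  assert (Hup : forall d m m', (m <= m')%nat -> (forall u, length u = m -> inD u -> ~ bad ((w ++ d :: nil) ++ u)) ->
     forall u, length u = m' -> inD u -> ~ bad ((w ++ d :: nil) ++ u)).
  { intros d m m' Hle H u Hl Hi Hb.
    rewrite <- (firstn_skipn m u) in Hb, Hi. apply Forall_app in Hi. destruct Hi as [Hi1 Hi2].
    rewrite app_assoc in Hb. apply bad_mono in Hb; auto.
    apply (H (firstn m u)); auto. apply firstn_length_le. lia. }
  destruct (Hq d0 ltac:(simpl; auto)) as [m0 H0].
  destruct (Hq d1 ltac:(simpl; auto)) as [m1 H1].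
  destruct (Hq d2 ltac:(simpl; auto)) as [m2 H2].
  set (M := (m0 + m1 + m2)%nat).
  destruct (Hw (S M)) as [u [Hl [Hi Hb]]].
  destruct u as [|d u']; [discriminate|]. simpl in Hl. injection Hl as Hl.
  inversion Hi as [|? ? Hd Hi']; subst.
  replace (w ++ d :: u') with ((w ++ d :: nil) ++ u') in Hb by (rewrite <- app_assoc; reflexivity).
  simpl in Hd. destruct Hd as [<-|[<-|[<-|[]]]].
  - eapply (Hup d0 m0 M); eauto. unfold M; lia.
  - eapply (Hup d1 m1 M); eauto. unfold M; lia.
  - eapply (Hup d2 m2 M); eauto. unfold M; lia.
Qed.

Definition nextd (w : list vec) : vec :=
  epsilon (inhabits vzero) (fun d => In d D /\ infbad (w ++ d :: nil)).

Fixpoint W (n : nat) : list vec :=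
  match n with O => nil | S k => W k ++ nextd (W k) :: nil end.

Lemma W_spec (H0 : infbad nil) : forall n, infbad (W n) /\ In (nextd (W n)) D.
Proof.
  assert (forall n, infbad (W n)).
  { induction n; auto. simpl.
    exact (proj2 (epsilon_spec (inhabits vzero) _ (infbad_step _ IHn))). }
  intro n. split; auto.
  exact (proj1 (epsilon_spec (inhabits vzero) _ (infbad_step _ (H n)))).
Qed.

Lemma koenig : exists N, forall w, length w = N -> inD w -> ~ bad w.
Proof.
  apply NNPP. intro Hn.
  assert (H0 : infbad nil).
  { intro m. apply NNPP. intro Hm. apply Hn. exists m. intros w Hl Hi Hb. apply Hm.
    exists w. auto. }
  pose proof (W_spec H0) as HW.
  set (om := fun k => nextd (W (pred k))).
  assert (Hom : forall i, In (om i) D) by (intro i; apply HW).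
  assert (HWp : forall n, W n = wpre om n).
  { induction n; auto. rewrite pre_snoc, <- IHn. reflexivity. }
  destruct (psum_conv A D K r HC om Hom) as [x [Hx _]].
  assert (Tx : T x) by (exists om; auto).
  pose proof HC as [HK [Hr Hc]].
  set (M := MT D K r).
  assert (HM : 0 <= M) by (unfold M; pose proof (T_bound A D K r HC x Tx); pose proof (nrm_pos x); lra).
  assert (near : forall eps, eps > 0 -> exists n, forall t, T t -> vdist x (G A (W n) t) < eps).
  { intros eps He.
    destruct (pow_lt_1_zero r ltac:(rewrite Rabs_right; lra) (eps / (K * (2 * M) + 1))) as [n Hpn].
    { apply Rdiv_lt_0_compat; nra. }
    exists n. intros t Tt.
    destruct (lim_pre A D HAB HBA om x Hom Hx n) as [t' [Tt' Ex]].
    rewrite <- HWp in Ex. rewrite Ex.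
    eapply Rle_lt_trans; [apply vdist_le|]. rewrite G_diff.
    eapply Rle_lt_trans; [apply Hc|].
    rewrite HWp, pre_len.
    pose proof (nrm_vsub_le t' t). pose proof (T_bound A D K r HC _ Tt). pose proof (T_bound A D K r HC _ Tt').
    specialize (Hpn n (le_n n)). rewrite Rabs_right in Hpn by (apply Rle_ge, pow_le; lra).
    pose proof (pow_le r n ltac:(lra)).
    apply (Rmult_lt_compat_r (K * (2 * M) + 1)) in Hpn; [|nra].
    unfold Rdiv in Hpn. rewrite Rmult_assoc, Rinv_l, Rmult_1_r in Hpn by nra.
    assert (nrm (vsub t' t) <= 2 * M) by (unfold M in *; lra).
    assert (K * r ^ n * nrm (vsub t' t) <= K * r ^ n * (2 * M)).
    { apply Rmult_le_compat_l; [nra|auto]. }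
    nra. }
  assert (badn : forall n, bad (W n)).
  { intro n. destruct (proj1 (HW n) O) as [u [Hl [_ Hb]]].
    destruct u; [|discriminate]. rewrite app_nil_r in Hb. exact Hb. }
  destruct (cov x Tx) as [Ux|Vx].
  - destruct (oU x Ux) as [eps [He Hball]].
    destruct (near eps He) as [n Hnear].
    destruct (badn n) as [_ [t [Tt Vt]]].
    apply (disj (G A (W n) t)); auto.
    + apply L3; auto. rewrite HWp. apply pre_inD; auto.
  - destruct (oV x Vx) as [eps [He Hball]].
    destruct (near eps He) as [n Hnear].
    destruct (badn n) as [[t [Tt Ut]] _].
    apply (disj (G A (W n) t)); auto.
    + apply L3; auto. rewrite HWp. apply pre_inD; auto.
Qed.

End Konig.

Theorem connected_of_edges : edge d0 d1 -> (edge d2 d0 \/ edge d2 d1) -> connected2 T.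
Proof.
  intros E01 E2 [U [V [oU [oV [cov [[x0 [Tx0 Ux0]] [[y0 [Ty0 Vy0]] disj]]]]]]].
  destruct (koenig U V oU oV cov disj) as [N HN].
  assert (Hw : forall w, length w = N -> inD w -> (forall t, T t -> U (G A w t)) \/ (forall t, T t -> V (G A w t))).
  { intros w Hl Hi. destruct (classic (forall t, T t -> U (G A w t))) as [h|h]; [left; auto|].
    right. apply not_all_ex_not in h. destruct h as [t1 h]. apply imply_to_and in h. destruct h as [Tt1 nU].
    assert (T (G A w t1)) by (apply L3; auto).
    assert (V (G A w t1)) by (destruct (cov _ H); tauto).
    intros t Tt. destruct (classic (V (G A w t))) as [h|h]; auto.
    exfalso. apply (HN w Hl Hi). split.
    - exists t. split; auto.
      assert (T (G A w t)) by (apply L3; auto). destruct (cov _ H1); tauto.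
    - exists t1. split; auto. }
  destruct (sides E01 E2 N U V cov disj Hw) as [h|h].
  - apply (disj y0); auto.
  - apply (disj x0); auto.
Qed.

End Main.

Lemma cvn_sub u w l m : cvn u l -> cvn w m -> cvn (fun n => vsub (u n) (w n)) (vsub l m).
Proof.
  intros Hu Hw eps He. destruct (Hu (eps/2)) as [N1 H1]; [lra|]. destruct (Hw (eps/2)) as [N2 H2]; [lra|].
  exists (N1 + N2)%nat. intros n Hn. specialize (H1 n ltac:(lia)). specialize (H2 n ltac:(lia)).
  unfold nrm, vsub, vadd, vopp in *. cbn [fst snd] in *.
  replace (fst (u n) + - fst (w n) + - (fst l + - fst m)) with ((fst (u n) + - fst l) - (fst (w n) + - fst m)) by ring.
  replace (snd (u n) + - snd (w n) + - (snd l + - snd m)) with ((snd (u n) + - snd l) - (snd (w n) + - snd m)) by ring.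
  pose proof (Rabs_triang (fst (u n) + - fst l) (- (fst (w n) + - fst m))).
  pose proof (Rabs_triang (snd (u n) + - snd l) (- (snd (w n) + - snd m))).
  rewrite Rabs_Ropp in *. unfold Rminus. lra.
Qed.

Lemma Bpow_add M n x y : Bpow M n (vadd x y) = vadd (Bpow M n x) (Bpow M n y).
Proof. induction n; [reflexivity|]. rewrite !Bpow_S, IHn, mapply_add. reflexivity. Qed.

Lemma Bpow_comm M n x : Bpow M n (mapply M x) = mapply M (Bpow M n x).
Proof. unfold Bpow. rewrite <- Nat.iter_succ_r. reflexivity. Qed.

Lemma psum_S A dig n : psum A dig (S n) = vadd (psum A dig n) (Bpow (minv A) (S n) (dig (S n))).
Proof. reflexivity. Qed.

Definition cvec (v w : vec) (s : Z * Z) : vec :=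
  vadd (vscale (IZR (fst s)) v) (vscale (IZR (snd s)) w).

Definition dc (sg : Z) (i : nat) : Z * Z :=
  match i with O => (0%Z, 0%Z) | S O => (1%Z, 0%Z) | _ => (1%Z, sg) end.

Definition nextst (p q sg : Z) (s : Z * Z) (i j : nat) : Z * Z :=
  ((- q * snd s - (fst (dc sg i) - fst (dc sg j)))%Z,
   (fst s - p * snd s - (snd (dc sg i) - snd (dc sg j)))%Z).

Fixpoint lk (tbl : list ((Z * Z) * (nat * nat))) (s : Z * Z) : option (nat * nat) :=
  match tbl with
  | nil => None
  | (s', e) :: tl => if (Z.eqb (fst s) (fst s') && Z.eqb (snd s) (snd s'))%bool then Some e else lk tl s
  end.

Definition isSome {X} (o : option X) : bool := match o with Some _ => true | None => false end.

Definition tbl_ok (p q sg : Z) (tbl : list ((Z * Z) * (nat * nat))) : bool :=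
  forallb (fun x => match x with (s, (i, j)) =>
     (Nat.leb i 2 && Nat.leb j 2 && isSome (lk tbl (nextst p q sg s i j)))%bool end) tbl.

Lemma lk_in tbl s e : lk tbl s = Some e -> In (s, e) tbl.
Proof.
  induction tbl as [|[s' e'] tl IH]; simpl; [discriminate|].
  destruct (Z.eqb (fst s) (fst s') && Z.eqb (snd s) (snd s'))%bool eqn:E.
  - intros [= <-]. left. apply Bool.andb_true_iff in E. destruct E as [E1 E2].
    apply Z.eqb_eq in E1, E2. destruct s, s'; simpl in *; subst; reflexivity.
  - intros H. right. auto.
Qed.

Lemma lk_ok p q sg tbl s i j : tbl_ok p q sg tbl = true -> lk tbl s = Some (i, j) ->
  (i <= 2)%nat /\ (j <= 2)%nat /\ isSome (lk tbl (nextst p q sg s i j)) = true.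
Proof.
  intros Hok Hl. apply lk_in in Hl. unfold tbl_ok in Hok. rewrite forallb_forall in Hok.
  specialize (Hok _ Hl). simpl in Hok. apply Bool.andb_true_iff in Hok. destruct Hok as [H1 H3].
  apply Bool.andb_true_iff in H1. destruct H1 as [H1 H2]. apply Nat.leb_le in H1, H2. auto.
Qed.

Definition Mt (v w : vec) (tbl : list ((Z * Z) * (nat * nat))) : R :=
  fold_right (fun x acc => nrm (cvec v w (fst x)) + acc) 0 tbl.

Lemma Mt_bound v w tbl x : In x tbl -> nrm (cvec v w (fst x)) <= Mt v w tbl.
Proof.
  induction tbl; simpl; [tauto|]. intros [<-|H].
  - assert (0 <= Mt v w tbl) by (clear; induction tbl; simpl; [lra| pose proof (nrm_pos (cvec v w (fst a))); lra]). lra.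
  - pose proof (nrm_pos (cvec v w (fst a))). specialize (IHtbl H). lra.
Qed.

Section Aut.
Variable A : M2.
Variable v : vec.
Variables p q sg : Z.
Variable d2 : vec.
Let w := mapply A v.
Let D := vzero :: v :: d2 :: nil.
Hypothesis HAB : forall x, mapply A (mapply (minv A) x) = x.
Hypothesis HBA : forall x, mapply (minv A) (mapply A x) = x.
Variables K r : R.
Hypothesis HC : contracts (minv A) K r.
Hypothesis HAv : mapply A w = vadd (vscale (- IZR p) w) (vscale (- IZR q) v).
Hypothesis Hd2 : d2 = cvec v w (1%Z, sg).
Let T := self_affine_set A D.

Definition dv (i : nat) : vec := nth i D vzero.

Lemma dv_in i : In (dv i) D.
Proof. unfold dv. destruct i as [|[|[|i]]]; simpl; auto. destruct i; auto. Qed.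

Lemma dv_cvec i : (i <= 2)%nat -> dv i = cvec v w (dc sg i).
Proof.
  intros Hi. destruct i as [|[|[|i]]]; [| | |lia]; unfold dv, cvec, dc; simpl nth; cbn [fst snd].
  - apply vec_ext; unfold vadd, vscale, vzero; cbn [fst snd]; ring.
  - apply vec_ext; unfold vadd, vscale, vzero; cbn [fst snd]; ring.
  - rewrite Hd2. reflexivity.
Qed.

Lemma A_cvec s : mapply A (cvec v w s) = cvec v w ((- q * snd s)%Z, (fst s - p * snd s)%Z).
Proof.
  unfold cvec. rewrite mapply_add.
  replace (mapply A (vscale (IZR (fst s)) v)) with (vscale (IZR (fst s)) w)
    by (unfold w; apply vec_ext; unfold vscale, mapply; cbn [fst snd]; ring).
  replace (mapply A (vscale (IZR (snd s)) w)) with (vscale (IZR (snd s)) (mapply A w))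
    by (apply vec_ext; unfold vscale, mapply; cbn [fst snd]; ring).
  rewrite HAv. cbn [fst snd]. rewrite !minus_IZR, !mult_IZR, !opp_IZR.
  apply vec_ext; unfold vadd, vscale; cbn [fst snd]; ring.
Qed.

Lemma step_eq s i j : (i <= 2)%nat -> (j <= 2)%nat ->
  cvec v w s = mapply (minv A) (vadd (vsub (dv i) (dv j)) (cvec v w (nextst p q sg s i j))).
Proof.
  intros Hi Hj. rewrite <- (HBA (cvec v w s)). f_equal.
  rewrite A_cvec, !dv_cvec by auto. unfold nextst, cvec. cbn [fst snd].
  rewrite !minus_IZR, !mult_IZR, !opp_IZR.
  apply vec_ext; unfold vsub, vadd, vscale, vopp; cbn [fst snd]; ring.
Qed.

Variable tbl : list ((Z * Z) * (nat * nat)).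
Hypothesis Hok : tbl_ok p q sg tbl = true.

Definition getij (s : Z * Z) : nat * nat := match lk tbl s with Some e => e | None => (O, O) end.

Fixpoint st (s0 : Z * Z) (k : nat) : Z * Z :=
  match k with O => s0 | S k' => let s := st s0 k' in nextst p q sg s (fst (getij s)) (snd (getij s)) end.

Lemma aut_edge s0 : isSome (lk tbl s0) = true ->
  exists t t', T t /\ T t' /\ vsub t t' = cvec v w s0.
Proof.
  intros H0.
  assert (Hin : forall k, isSome (lk tbl (st s0 k)) = true).
  { induction k; auto. simpl. unfold getij.
    destruct (lk tbl (st s0 k)) as [[i j]|] eqn:E; [|discriminate].
    pose proof (lk_ok _ _ _ _ _ _ _ Hok E) as (_ & _ & H). exact H. }
  assert (Hij : forall k, (fst (getij (st s0 k)) <= 2)%nat /\ (snd (getij (st s0 k)) <= 2)%nat).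
  { intro k. specialize (Hin k). unfold getij.
    destruct (lk tbl (st s0 k)) as [[i j]|] eqn:E; [|discriminate].
    pose proof (lk_ok _ _ _ _ _ _ _ Hok E) as (? & ? & _). simpl; auto. }
  assert (Hbd : forall k, nrm (cvec v w (st s0 k)) <= Mt v w tbl).
  { intro k. specialize (Hin k). destruct (lk tbl (st s0 k)) as [e|] eqn:E; [|discriminate].
    apply lk_in in E. apply (Mt_bound v w tbl _ E). }
  set (dig := fun k => dv (fst (getij (st s0 (pred k))))).
  set (dig' := fun k => dv (snd (getij (st s0 (pred k))))).
  assert (Hdig : forall i, In (dig i) D) by (intro; apply dv_in).
  assert (Hdig' : forall i, In (dig' i) D) by (intro; apply dv_in).
  destruct (psum_conv A D K r HC dig Hdig) as [t [Ht _]].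
  destruct (psum_conv A D K r HC dig' Hdig') as [t' [Ht' _]].
  exists t, t'. split; [exists dig; auto|]. split; [exists dig'; auto|].
  assert (Htel : forall n, vadd (vsub (psum A dig n) (psum A dig' n)) (Bpow (minv A) n (cvec v w (st s0 n))) = cvec v w s0).
  { induction n.
    - simpl. apply vec_ext; unfold vsub, vadd, vopp, vzero; cbn [fst snd]; ring.
    - rewrite <- IHn. destruct (Hij n) as [Hi Hj].
      rewrite !psum_S.
      rewrite (step_eq (st s0 n) _ _ Hi Hj). rewrite Bpow_comm.
      change (mapply (minv A) (Bpow (minv A) n ?x)) with (Bpow (minv A) (S n) x).
      rewrite Bpow_add, Bpow_sub.
      change (st s0 (S n)) with (nextst p q sg (st s0 n) (fst (getij (st s0 n))) (snd (getij (st s0 n)))).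
      change (dig (S n)) with (dv (fst (getij (st s0 n)))).
      change (dig' (S n)) with (dv (snd (getij (st s0 n)))).
      generalize (Bpow (minv A) (S n) (dv (fst (getij (st s0 n))))).
      generalize (Bpow (minv A) (S n) (dv (snd (getij (st s0 n))))).
      generalize (Bpow (minv A) (S n) (cvec v w (nextst p q sg (st s0 n) (fst (getij (st s0 n))) (snd (getij (st s0 n)))))).
      intros. apply vec_ext; unfold vsub, vadd, vopp; cbn [fst snd]; ring. }
  apply cvn_vec_cv in Ht. apply cvn_vec_cv in Ht'.
  pose proof (cvn_sub _ _ _ _ Ht Ht') as Hd.
  apply (cvn_unique _ _ _ Hd).
  pose proof HC as [HK [Hr Hc]].
  pose proof (Hbd O) as Hb0. pose proof (nrm_pos (cvec v w (st s0 O))).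
  intros eps He.
  destruct (pow_lt_1_zero r ltac:(rewrite Rabs_right; lra) (eps / (K * Mt v w tbl + 1))) as [N HN].
  { apply Rdiv_lt_0_compat; nra. }
  exists N. intros n Hn. specialize (HN n Hn). rewrite Rabs_right in HN by (apply Rle_ge, pow_le; lra).
  rewrite <- (Htel n).
  replace (vsub (vsub (psum A dig n) (psum A dig' n))
     (vadd (vsub (psum A dig n) (psum A dig' n)) (Bpow (minv A) n (cvec v w (st s0 n)))))
    with (vopp (Bpow (minv A) n (cvec v w (st s0 n))))
    by (apply vec_ext; unfold vsub, vadd, vopp; cbn [fst snd]; ring).
  replace (nrm (vopp (Bpow (minv A) n (cvec v w (st s0 n))))) with (nrm (Bpow (minv A) n (cvec v w (st s0 n))))
    by (unfold nrm, vopp; cbn [fst snd]; rewrite !Rabs_Ropp; reflexivity).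
  eapply Rle_lt_trans; [apply Hc|].
  pose proof (pow_le r n ltac:(lra)). pose proof (Hbd n).
  apply (Rmult_lt_compat_r (K * Mt v w tbl + 1)) in HN; [|nra].
  unfold Rdiv in HN. rewrite Rmult_assoc, Rinv_l, Rmult_1_r in HN by nra.
  assert (K * r ^ n * nrm (cvec v w (st s0 n)) <= K * r ^ n * Mt v w tbl).
  { apply Rmult_le_compat_l; [nra|auto]. }
  nra.
Qed.

End Aut.

Lemma quad_root p q lo hi : lo <= hi -> (lo^2 + p*lo + q) * (hi^2 + p*hi + q) <= 0 ->
  exists z, lo <= z <= hi /\ z^2 + p*z + q = 0.
Proof.
  intros Hle Hp.
  destruct (IVT_cor (fun z => z^2 + p*z + q) lo hi) as [z [Hz Ez]]; auto.
  - reg.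
  - exists z; auto.
Qed.

Lemma not_exp_root (A : M2) p q z : char_poly_is A p q -> z^2 + p*z + q = 0 -> -1 <= z <= 1 -> ~ expanding A.
Proof.
  intros Hc Hz Hr Hexp. specialize (Hexp (z, 0)).
  assert (is_eigenvalue A (z, 0)).
  { unfold is_eigenvalue, Csub, Cmul, Creal. cbn [fst snd]. specialize (Hc z).
    apply vec_ext; cbn [fst snd]; nra. }
  specialize (Hexp H). cbn [fst snd] in Hexp. nra.
Qed.

Lemma p_range_3 A p : char_poly_is A (IZR p) (IZR 3) -> expanding A -> (-3 <= p <= 3)%Z.
Proof.
  intros Hc He. destruct (Z_le_gt_dec 4 p) as [h|h].
  - apply IZR_le in h. exfalso. destruct (quad_root (IZR p) (IZR 3) (-1) 0) as [z [Hz Ez]]; [lra| |].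
    + simpl. nra.
    + apply (not_exp_root A _ _ z Hc Ez); auto; lra.
  - destruct (Z_le_gt_dec p (-4)) as [h'|h']; [|lia].
    apply IZR_le in h'. exfalso. destruct (quad_root (IZR p) (IZR 3) 0 1) as [z [Hz Ez]]; [lra| |].
    + simpl. nra.
    + apply (not_exp_root A _ _ z Hc Ez); auto; lra.
Qed.

Lemma p_range_m3 A p : char_poly_is A (IZR p) (IZR (-3)) -> expanding A -> (-1 <= p <= 1)%Z.
Proof.
  intros Hc He. destruct (Z_le_gt_dec 2 p) as [h|h].
  - apply IZR_le in h. exfalso. destruct (quad_root (IZR p) (IZR (-3)) 0 1) as [z [Hz Ez]]; [lra| |].
    + simpl. nra.
    + apply (not_exp_root A _ _ z Hc Ez); auto; lra.
  - destruct (Z_le_gt_dec p (-2)) as [h'|h']; [|lia].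
    apply IZR_le in h'. exfalso. destruct (quad_root (IZR p) (IZR (-3)) (-1) 0) as [z [Hz Ez]]; [lra| |].
    + simpl. nra.
    + apply (not_exp_root A _ _ z Hc Ez); auto; lra.
Qed.

Lemma setup (A : M2) (p q : R) : q <> 0 -> char_poly_is A p q ->
  (forall x, mapply A (mapply (minv A) x) = x) /\ (forall x, mapply (minv A) (mapply A x) = x) /\
  (forall x, mapply A (mapply A x) = vadd (vscale (-p) (mapply A x)) (vscale (-q) x)) /\
  (forall x, mapply (minv A) (mapply (minv A) x) = vsub (vscale (-p/q) (mapply (minv A) x)) (vscale (1/q) x)).
Proof.
  intros Hq Hc. destruct A as [a b c d].
  pose proof (Hc 0) as H0. pose proof (Hc 1) as H1. cbn [e11 e12 e21 e22] in H0, H1.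
  assert (Hdet : a * d - b * c = q) by nra.
  assert (Htr : p = - (a + d)) by nra.
  subst q p.
  unfold vsub; unfold mapply, minv, mdet, vadd, vscale, vopp; cbn [e11 e12 e21 e22].
  split; [|split; [|split]]; intro x; apply vec_ext; cbn [fst snd]; field; auto.
Qed.

Lemma IZR1 : IZR 1 = 1. Proof. reflexivity. Qed.
Lemma IZR0 : IZR 0 = 0. Proof. reflexivity. Qed.

Lemma conn_case (A : M2) (v : vec) (p q sg : Z) (d2 : vec) K r
  (tbl01 tbl2 : list ((Z * Z) * (nat * nat))) (s2 : Z * Z) :
  (forall x, mapply A (mapply (minv A) x) = x) -> (forall x, mapply (minv A) (mapply A x) = x) ->
  contracts (minv A) K r ->
  mapply A (mapply A v) = vadd (vscale (- IZR p) (mapply A v)) (vscale (- IZR q) v) ->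
  d2 = cvec v (mapply A v) (1%Z, sg) ->
  tbl_ok p q sg tbl01 = true -> isSome (lk tbl01 (1%Z, 0%Z)) = true ->
  tbl_ok p q sg tbl2 = true -> isSome (lk tbl2 s2) = true ->
  (s2 = (1%Z, sg) \/ s2 = (0%Z, sg)) ->
  connected2 (self_affine_set A (vzero :: v :: d2 :: nil)).
Proof.
  intros HAB HBA HC HAv Hd2 Ho1 Hl1 Ho2 Hl2 Hs.
  apply (connected_of_edges A vzero v d2 HAB HBA K r HC).
  - destruct (aut_edge A v p q sg d2 HBA K r HC HAv Hd2 tbl01 Ho1 _ Hl1) as [t [t' [Tt [Tt' E]]]].
    exists t, t'. split; [auto|]. split; [auto|].
    unfold cvec in E. cbn [fst snd] in E. rewrite ?IZR1, ?IZR0 in E.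
    apply vec_ext; [apply (f_equal fst) in E | apply (f_equal snd) in E]; unfold vsub, vadd, vopp, vscale, vzero in *; cbn [fst snd] in *; lra.
  - destruct (aut_edge A v p q sg d2 HBA K r HC HAv Hd2 tbl2 Ho2 _ Hl2) as [t [t' [Tt [Tt' E]]]].
    destruct Hs as [-> | ->]; [left|right]; exists t', t; split; auto; split; auto;
    rewrite Hd2; unfold cvec in *; cbn [fst snd] in *; rewrite ?IZR1, ?IZR0 in *;
    (apply vec_ext; [apply (f_equal fst) in E| apply (f_equal snd) in E];
    unfold vsub, vadd, vopp, vscale, vzero in *; cbn [fst snd] in *; lra).
Qed.

Theorem corollary3p5 (a b c d p q : Z) (v : R * R) :
  expanding (M2Z a b c d) ->
  char_poly_is (M2Z a b c d) (IZR p) (IZR q) ->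
  Z.abs q = 3%Z ->
  lin_indep2 v (mapply (M2Z a b c d) v) ->
  connected2 (self_affine_set (M2Z a b c d)
                (vzero :: v :: vadd (mapply (M2Z a b c d) v) v :: nil)) /\
  connected2 (self_affine_set (M2Z a b c d)
                (vzero :: v :: vadd (vopp (mapply (M2Z a b c d) v)) v :: nil)).
Proof.
  intros Hexp Hchar Hq _.
  assert (Hq' : q = 3%Z \/ q = (-3)%Z) by lia.
  assert (Hqn : IZR q <> 0) by (apply not_0_IZR; lia).
  destruct (setup _ _ _ Hqn Hchar) as [HAB [HBA [HAA HBB]]].
  assert (Hd2a : vadd (mapply (M2Z a b c d) v) v = cvec v (mapply (M2Z a b c d) v) (1%Z, 1%Z)).
  { unfold cvec. cbn [fst snd]. apply vec_ext; unfold vadd, vscale; cbn [fst snd]; ring. }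
  assert (Hd2b : vadd (vopp (mapply (M2Z a b c d) v)) v = cvec v (mapply (M2Z a b c d) v) (1%Z, (-1)%Z)).
  { unfold cvec. cbn [fst snd]. apply vec_ext; unfold vadd, vscale, vopp; cbn [fst snd]; ring. }
  assert (HC : contracts (minv (M2Z a b c d)) (8 * (1 + mn (minv (M2Z a b c d)))) (5/6)).
  { destruct Hq' as [-> | ->].
    - pose proof (p_range_3 _ _ Hchar Hexp) as Hp.
      apply (contracts_of_rec _ (- IZR p / 3) (1/3)).
      + intros s Hs. apply (decay_q3 (IZR p)); auto.
        destruct Hp as [Hp1 Hp2]. apply IZR_le in Hp1, Hp2. simpl. nra.
      + exact HBB.
    - pose proof (p_range_m3 _ _ Hchar Hexp) as Hp.
      apply (contracts_of_rec _ (- IZR p / IZR (-3)) (1 / IZR (-3))).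
      + intros s Hs. apply (decay_qm3 (IZR p)).
        * destruct Hp as [Hp1 Hp2]. apply IZR_le in Hp1, Hp2. lra.
        * intro n. rewrite Hs. replace (IZR (-3)) with (-3) by reflexivity. field.
      + exact HBB. }
  destruct Hq' as [-> | ->].
  -
    pose proof (p_range_3 _ _ Hchar Hexp) as Hp.
    assert (p = (-3)%Z \/ p = (-2)%Z \/ p = (-1)%Z \/ p = (0)%Z \/ p = (1)%Z \/ p = (2)%Z \/ p = (3)%Z) as Hps by lia.
    destruct Hps as [Hps|[Hps|[Hps|[Hps|[Hps|[Hps|Hps]]]]]]; subst p; split.
    + apply (conn_case (M2Z a b c d) v (-3)%Z (3)%Z (1)%Z _ _ _ (((1,0)%Z,(2,1)%nat) :: ((0,0)%Z,(0,0)%nat) :: nil) (((0,1)%Z,(2,0)%nat) :: ((-4,2)%Z,(0,1)%nat) :: ((-5,2)%Z,(0,2)%nat) :: nil) ((0)%Z, (1)%Z)%Z HAB HBA HC (HAA v) Hd2a);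
      [reflexivity|reflexivity|reflexivity|reflexivity|simpl; auto].
    + apply (conn_case (M2Z a b c d) v (-3)%Z (3)%Z (-1)%Z _ _ _ (((1,0)%Z,(1,2)%nat) :: ((0,0)%Z,(0,0)%nat) :: nil) (((1,-1)%Z,(2,0)%nat) :: ((2,-1)%Z,(1,0)%nat) :: nil) ((1)%Z, (-1)%Z)%Z HAB HBA HC (HAA v) Hd2b);
      [reflexivity|reflexivity|reflexivity|reflexivity|simpl; auto].
    + apply (conn_case (M2Z a b c d) v (-2)%Z (3)%Z (1)%Z _ _ _ (((1,0)%Z,(2,1)%nat) :: ((0,0)%Z,(0,0)%nat) :: nil) (((0,1)%Z,(2,1)%nat) :: ((-3,1)%Z,(0,2)%nat) :: ((-2,0)%Z,(1,2)%nat) :: ((0,-1)%Z,(1,2)%nat) :: ((3,-1)%Z,(2,0)%nat) :: ((2,0)%Z,(2,1)%nat) :: nil) ((0)%Z, (1)%Z)%Z HAB HBA HC (HAA v) Hd2a);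
      [reflexivity|reflexivity|reflexivity|reflexivity|simpl; auto].
    + apply (conn_case (M2Z a b c d) v (-2)%Z (3)%Z (-1)%Z _ _ _ (((1,0)%Z,(1,2)%nat) :: ((0,0)%Z,(0,0)%nat) :: nil) (((1,-1)%Z,(2,0)%nat) :: ((2,0)%Z,(1,2)%nat) :: ((0,1)%Z,(0,2)%nat) :: ((-2,1)%Z,(0,1)%nat) :: ((-2,0)%Z,(2,1)%nat) :: ((0,-1)%Z,(2,0)%nat) :: ((2,-1)%Z,(1,0)%nat) :: nil) ((1)%Z, (-1)%Z)%Z HAB HBA HC (HAA v) Hd2b);
      [reflexivity|reflexivity|reflexivity|reflexivity|simpl; auto].
    + apply (conn_case (M2Z a b c d) v (-1)%Z (3)%Z (1)%Z _ _ _ (((1,0)%Z,(2,1)%nat) :: ((0,0)%Z,(0,0)%nat) :: nil) (((0,1)%Z,(0,1)%nat) :: ((-2,1)%Z,(0,2)%nat) :: ((-2,0)%Z,(1,2)%nat) :: ((0,-1)%Z,(1,0)%nat) :: ((2,-1)%Z,(2,0)%nat) :: ((2,0)%Z,(2,1)%nat) :: nil) ((0)%Z, (1)%Z)%Z HAB HBA HC (HAA v) Hd2a);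
      [reflexivity|reflexivity|reflexivity|reflexivity|simpl; auto].
    + apply (conn_case (M2Z a b c d) v (-1)%Z (3)%Z (-1)%Z _ _ _ (((1,0)%Z,(1,2)%nat) :: ((0,0)%Z,(0,0)%nat) :: nil) (((1,-1)%Z,(1,0)%nat) :: ((2,0)%Z,(1,2)%nat) :: ((0,1)%Z,(0,2)%nat) :: ((-2,0)%Z,(2,1)%nat) :: ((0,-1)%Z,(2,0)%nat) :: nil) ((1)%Z, (-1)%Z)%Z HAB HBA HC (HAA v) Hd2b);
      [reflexivity|reflexivity|reflexivity|reflexivity|simpl; auto].
    + apply (conn_case (M2Z a b c d) v (0)%Z (3)%Z (1)%Z _ _ _ (((1,0)%Z,(2,1)%nat) :: ((0,0)%Z,(0,0)%nat) :: nil) (((0,1)%Z,(0,1)%nat) :: ((-2,0)%Z,(1,2)%nat) :: ((0,-1)%Z,(1,0)%nat) :: ((2,0)%Z,(2,1)%nat) :: nil) ((0)%Z, (1)%Z)%Z HAB HBA HC (HAA v) Hd2a);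
      [reflexivity|reflexivity|reflexivity|reflexivity|simpl; auto].
    + apply (conn_case (M2Z a b c d) v (0)%Z (3)%Z (-1)%Z _ _ _ (((1,0)%Z,(1,2)%nat) :: ((0,0)%Z,(0,0)%nat) :: nil) (((0,-1)%Z,(1,0)%nat) :: ((2,0)%Z,(1,2)%nat) :: ((0,1)%Z,(0,1)%nat) :: ((-2,0)%Z,(2,1)%nat) :: nil) ((0)%Z, (-1)%Z)%Z HAB HBA HC (HAA v) Hd2b);
      [reflexivity|reflexivity|reflexivity|reflexivity|simpl; auto].
    + apply (conn_case (M2Z a b c d) v (1)%Z (3)%Z (1)%Z _ _ _ (((1,0)%Z,(2,1)%nat) :: ((0,0)%Z,(0,0)%nat) :: nil) (((1,1)%Z,(0,1)%nat) :: ((-2,0)%Z,(1,2)%nat) :: ((0,-1)%Z,(2,0)%nat) :: ((2,0)%Z,(2,1)%nat) :: ((0,1)%Z,(0,2)%nat) :: nil) ((1)%Z, (1)%Z)%Z HAB HBA HC (HAA v) Hd2a);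
      [reflexivity|reflexivity|reflexivity|reflexivity|simpl; auto].
    + apply (conn_case (M2Z a b c d) v (1)%Z (3)%Z (-1)%Z _ _ _ (((1,0)%Z,(1,2)%nat) :: ((0,0)%Z,(0,0)%nat) :: nil) (((0,-1)%Z,(1,0)%nat) :: ((2,1)%Z,(0,2)%nat) :: ((-2,0)%Z,(2,1)%nat) :: nil) ((0)%Z, (-1)%Z)%Z HAB HBA HC (HAA v) Hd2b);
      [reflexivity|reflexivity|reflexivity|reflexivity|simpl; auto].
    + apply (conn_case (M2Z a b c d) v (2)%Z (3)%Z (1)%Z _ _ _ (((1,0)%Z,(2,1)%nat) :: ((0,0)%Z,(0,0)%nat) :: nil) (((1,1)%Z,(0,2)%nat) :: ((-2,0)%Z,(1,2)%nat) :: ((0,-1)%Z,(2,0)%nat) :: ((2,1)%Z,(0,1)%nat) :: nil) ((1)%Z, (1)%Z)%Z HAB HBA HC (HAA v) Hd2a);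
      [reflexivity|reflexivity|reflexivity|reflexivity|simpl; auto].
    + apply (conn_case (M2Z a b c d) v (2)%Z (3)%Z (-1)%Z _ _ _ (((1,0)%Z,(1,2)%nat) :: ((0,0)%Z,(0,0)%nat) :: nil) (((0,-1)%Z,(1,2)%nat) :: ((3,1)%Z,(0,2)%nat) :: ((-2,0)%Z,(2,1)%nat) :: nil) ((0)%Z, (-1)%Z)%Z HAB HBA HC (HAA v) Hd2b);
      [reflexivity|reflexivity|reflexivity|reflexivity|simpl; auto].
    + apply (conn_case (M2Z a b c d) v (3)%Z (3)%Z (1)%Z _ _ _ (((1,0)%Z,(2,1)%nat) :: ((0,0)%Z,(0,0)%nat) :: nil) (((1,1)%Z,(0,2)%nat) :: ((-2,-1)%Z,(1,0)%nat) :: ((2,1)%Z,(0,1)%nat) :: nil) ((1)%Z, (1)%Z)%Z HAB HBA HC (HAA v) Hd2a);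
      [reflexivity|reflexivity|reflexivity|reflexivity|simpl; auto].
    + apply (conn_case (M2Z a b c d) v (3)%Z (3)%Z (-1)%Z _ _ _ (((1,0)%Z,(1,2)%nat) :: ((0,0)%Z,(0,0)%nat) :: nil) (((0,-1)%Z,(0,2)%nat) :: ((4,2)%Z,(0,1)%nat) :: ((-5,-2)%Z,(2,0)%nat) :: ((5,2)%Z,(0,2)%nat) :: nil) ((0)%Z, (-1)%Z)%Z HAB HBA HC (HAA v) Hd2b);
      [reflexivity|reflexivity|reflexivity|reflexivity|simpl; auto].
  -
    pose proof (p_range_m3 _ _ Hchar Hexp) as Hp.
    assert (p = (-1)%Z \/ p = (0)%Z \/ p = (1)%Z) as Hps by lia.
    destruct Hps as [Hps|[Hps|Hps]]; subst p; split.
    + apply (conn_case (M2Z a b c d) v (-1)%Z (-3)%Z (1)%Z _ _ _ (((1,0)%Z,(2,1)%nat) :: ((0,0)%Z,(0,0)%nat) :: nil) (((0,1)%Z,(2,0)%nat) :: ((2,0)%Z,(2,1)%nat) :: nil) ((0)%Z, (1)%Z)%Z HAB HBA HC (HAA v) Hd2a);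
      [reflexivity|reflexivity|reflexivity|reflexivity|simpl; auto].
    + apply (conn_case (M2Z a b c d) v (-1)%Z (-3)%Z (-1)%Z _ _ _ (((1,0)%Z,(1,2)%nat) :: ((0,0)%Z,(0,0)%nat) :: nil) (((1,-1)%Z,(2,1)%nat) :: ((-3,1)%Z,(2,0)%nat) :: ((2,-1)%Z,(0,1)%nat) :: ((-2,1)%Z,(1,0)%nat) :: nil) ((1)%Z, (-1)%Z)%Z HAB HBA HC (HAA v) Hd2b);
      [reflexivity|reflexivity|reflexivity|reflexivity|simpl; auto].
    + apply (conn_case (M2Z a b c d) v (0)%Z (-3)%Z (1)%Z _ _ _ (((1,0)%Z,(2,1)%nat) :: ((0,0)%Z,(0,0)%nat) :: nil) (((1,1)%Z,(2,0)%nat) :: ((2,0)%Z,(2,1)%nat) :: ((0,1)%Z,(1,0)%nat) :: nil) ((1)%Z, (1)%Z)%Z HAB HBA HC (HAA v) Hd2a);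
      [reflexivity|reflexivity|reflexivity|reflexivity|simpl; auto].
    + apply (conn_case (M2Z a b c d) v (0)%Z (-3)%Z (-1)%Z _ _ _ (((1,0)%Z,(1,2)%nat) :: ((0,0)%Z,(0,0)%nat) :: nil) (((1,-1)%Z,(0,2)%nat) :: ((-2,0)%Z,(2,1)%nat) :: ((0,-1)%Z,(0,1)%nat) :: nil) ((1)%Z, (-1)%Z)%Z HAB HBA HC (HAA v) Hd2b);
      [reflexivity|reflexivity|reflexivity|reflexivity|simpl; auto].
    + apply (conn_case (M2Z a b c d) v (1)%Z (-3)%Z (1)%Z _ _ _ (((1,0)%Z,(2,1)%nat) :: ((0,0)%Z,(0,0)%nat) :: nil) (((1,1)%Z,(1,2)%nat) :: ((3,1)%Z,(2,0)%nat) :: ((2,1)%Z,(1,0)%nat) :: nil) ((1)%Z, (1)%Z)%Z HAB HBA HC (HAA v) Hd2a);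
      [reflexivity|reflexivity|reflexivity|reflexivity|simpl; auto].
    + apply (conn_case (M2Z a b c d) v (1)%Z (-3)%Z (-1)%Z _ _ _ (((1,0)%Z,(1,2)%nat) :: ((0,0)%Z,(0,0)%nat) :: nil) (((0,-1)%Z,(0,2)%nat) :: ((-2,0)%Z,(2,1)%nat) :: nil) ((0)%Z, (-1)%Z)%Z HAB HBA HC (HAA v) Hd2b);
      [reflexivity|reflexivity|reflexivity|reflexivity|simpl; auto].
Qed.
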